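(* Let $\omega$ be a primitive third root of unity, $S=\mathbb{C}\langle x,y,z\rangle/(x^2,y^2,z^2)$ graded by $\deg x=\deg y=\deg z=1$. For $p=([A_1:B_1],[A_2:B_2])\in\mathbb{P}^1\times\mathbb{P}^1$ let $I_p$ be the two-sided ideal of $S$ generated by $$A_1(zxy+\omega xyz+\omega^2 yzx)+B_1(yxz+\omega zyx+\omega^2 xzy),\quad A_2(zxy+\omega^2 xyz+\omega yzx)+B_2(yxz+\omega^2 zyx+\omega xzy).$$ Then $\dim (S/I_p)_k=\dim\mathbb{C}[x,y,z]_k=\binom{k+2}{2}$ for all $k\le 4$ if and only if $A_1B_2-A_2B_1=0$. *)

(* Defs.v *)
From mathcomp Require Import all_boot all_algebra.
From mathcomp Require Import complex.
From mathcomp Require Import Rstruct.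

Set Implicit Arguments.
Unset Strict Implicit.
Unset Printing Implicit Defensive.

Import GRing.Theory Num.Theory.
Local Open Scope ring_scope.

Notation Cx := (Rdefinitions.R[i]).

Section FreeAlg.
Variable F : fieldType.

Definition LX : 'I_3 := @Ordinal 3 0 isT.
Definition LY : 'I_3 := @Ordinal 3 1 isT.
Definition LZ : 'I_3 := @Ordinal 3 2 isT.

(* An element of the free algebra F<x,y,z> is given by its coefficient
   function on words (finite support is not needed for what follows). *)
Definition ncpoly := seq 'I_3 -> F.

Definition ncmul (f g : ncpoly) : ncpoly :=
  fun w => \sum_(i < (size w).+1) f (take i w) * g (drop i w).

Definition mono (u : seq 'I_3) : ncpoly := fun w => (w == u)%:R.

Definition lin (l : seq (F * seq 'I_3)) : ncpoly :=
  fun w => \sum_(p <- l) p.1 * mono p.2 w.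

Definition words_upto (k : nat) : seq (seq 'I_3) :=
  flatten [seq [seq tval t | t <- enum {: n.-tuple 'I_3}] | n <- iota 0 k.+1].

(* The elements u * g * v, for words u, v of length <= k and g in G.  Their
   degree-k homogeneous components span the degree-k component of the
   two-sided ideal generated by G (words longer than k contribute nothing
   in degree k). *)
Definition ideal_spanning (k : nat) (G : seq ncpoly) : seq ncpoly :=
  flatten [seq [seq ncmul (ncmul (mono u) g) (mono v) | u <- words_upto k, v <- words_upto k]
          | g <- G].

Definition component_mx (k : nat) (L : seq ncpoly) :
  'M[F]_(size L, #|{: k.-tuple 'I_3}|) :=
  \matrix_(i, j) (nth (fun _ => 0) L i) (tval (enum_val j)).

(* dim_F (F<x,y,z>/(G))_k = dim F<x,y,z>_k - dim (G)_k, for G a list of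
   homogeneous elements (so that the ideal (G) is graded). *)
Definition quot_dim (k : nat) (G : seq ncpoly) : nat :=
  #|{: k.-tuple 'I_3}| - \rank (component_mx k (ideal_spanning k G)).

Definition gen1 (w A B : F) : ncpoly :=
  lin [:: (A, [:: LZ; LX; LY]); (A * w, [:: LX; LY; LZ]); (A * w ^+ 2, [:: LY; LZ; LX]);
          (B, [:: LY; LX; LZ]); (B * w, [:: LZ; LY; LX]); (B * w ^+ 2, [:: LX; LZ; LY])].

Definition gen2 (w A B : F) : ncpoly :=
  lin [:: (A, [:: LZ; LX; LY]); (A * w ^+ 2, [:: LX; LY; LZ]); (A * w, [:: LY; LZ; LX]);
          (B, [:: LY; LX; LZ]); (B * w ^+ 2, [:: LZ; LY; LX]); (B * w, [:: LX; LZ; LY])].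

(* S/I_p = F<x,y,z>/(x^2, y^2, z^2, gen1, gen2). *)
Definition SIp_gens (w A1 B1 A2 B2 : F) : seq ncpoly :=
  [:: mono [:: LX; LX]; mono [:: LY; LY]; mono [:: LZ; LZ];
      gen1 w A1 B1; gen2 w A2 B2].

End FreeAlg.

(* Main.v *)
Require Import Defs.
From mathcomp Require Import all_boot all_algebra.
From mathcomp Require Import complex.
From mathcomp Require Import Rstruct.
From mathcomp Require Import ring zify.
Import GRing.Theory Num.Theory.
Local Open Scope ring_scope.

Set Implicit Arguments.
Unset Strict Implicit.
Unset Printing Implicit Defensive.

Fixpoint sqf (s : seq 'I_3) : bool :=
  match s with a :: ((b :: _) as t) => (a != b) && sqf t | _ => true end.

Definition Sk k : {set 'I_(#|{: k.-tuple 'I_3}|)} := [set j | sqf (tval (enum_val j))].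

Ltac slia := repeat match goal with H : context [size _] |- _ => revert H | H : context [nat_of_ord _] |- _ => revert H end;
  repeat match goal with |- context [size ?x] => let n := fresh "n" in move: (size x) => n
                    | |- context [nat_of_ord ?x] => let n := fresh "n" in move: (nat_of_ord x) => n end; lia.
Ltac sg := match goal with |- ?G => idtac G end.
Section Gen.
Variable F : fieldType.
Local Notation ncp := (ncpoly F).

Definition rv k (f : ncp) : 'rV[F]_(#|{: k.-tuple 'I_3}|) := \row_j f (tval (enum_val j)).
Definition proj (f : ncp) : ncp := fun t => if sqf t then f t else 0.
Definition Pk k : 'M[F]_(#|{: k.-tuple 'I_3}|) := \matrix_(i, j) ((i == j) && (i \in Sk k))%:R.
Definition U (u : seq 'I_3) (g : ncp) (v : seq 'I_3) : ncp := ncmul (ncmul (mono F u) g) (mono F v).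

Lemma ncmul_monol u (f : ncp) t :
  ncmul (mono F u) f t = if take (size u) t == u then f (drop (size u) t) else 0.
Proof.
rewrite /ncmul /mono.
transitivity (\sum_(i < (size t).+1 | i == size u :> nat)
                ((take (size u) t == u)%:R * f (drop (size u) t))).
  rewrite [RHS]big_mkcond; apply: eq_bigr => i _.
  have Hi := ltn_ord i.
  case: (eqVneq (i : nat) (size u)) => [->|Hne] /=; first by [].
  case: eqP => [Ht|]; last by rewrite mul0r.
  have := congr1 size Ht; rewrite size_take; move: Hne => /eqP Hne; case: ltnP => H1 H2; exfalso; slia.
rewrite (big_ord1_eq _ (fun=> _)); case: ltnP => Hs.
  by case: (_ == u) => /=; [exact: mul1r | exact: mul0r].
case: eqP => // Ht; have := congr1 size Ht; rewrite size_take; case: ltnP => ? ?; exfalso; slia.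
Qed.

Lemma ncmul_monor (f : ncp) v t :
  ncmul f (mono F v) t =
  if drop (size t - size v) t == v then f (take (size t - size v) t) else 0.
Proof.
rewrite /ncmul /mono.
transitivity (\sum_(i < (size t).+1 | i == (size t - size v)%N :> nat)
                ((drop (size t - size v) t == v)%:R * f (take (size t - size v) t))).
  rewrite [RHS]big_mkcond; apply: eq_bigr => i _.
  have Hi := ltn_ord i.
  case: (eqVneq (i : nat) (size t - size v)%N) => [->|Hne] /=; first by rewrite mulrC.
  case: eqP => [Ht|]; last by rewrite mulr0.
  by move: Hne; rewrite -Ht size_drop => /eqP; slia.
rewrite (big_ord1_eq _ (fun=> _)) ifT; last slia.
by case: (_ == v) => /=; [exact: mul1r | exact: mul0r].
Qed.

Lemma U_eval u g v t : U u g v t =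
  if drop (size t - size v) t == v then
    (if take (size u) (take (size t - size v) t) == u then
       g (drop (size u) (take (size t - size v) t)) else 0) else 0.
Proof. by rewrite /U ncmul_monor ncmul_monol. Qed.

Lemma U_size u g v (d : nat) t : (forall s, size s != d -> g s = 0) ->
  size t != (size u + d + size v)%N -> U u g v t = 0.
Proof.
move=> Hg Ht; rewrite U_eval.
case: eqP => // H1; case: eqP => // H2; apply: Hg.
have h1 := f_equal size H1; have h2 := f_equal size H2.
move: h1 h2 Ht; rewrite ?size_drop ?size_take_min ?size_drop ?size_take_min; slia.
Qed.

Lemma U_mono u m v t : U u (mono F m) v t = mono F (u ++ m ++ v) t.
Proof.
rewrite U_eval /mono.
case: (eqVneq t (u ++ m ++ v)) => [->|Hne].
  rewrite !size_cat addnA addnK catA drop_size_cat ?size_cat // eqxx.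
  by rewrite take_size_cat ?size_cat // take_size_cat // eqxx drop_size_cat // eqxx.
case: eqP => // H1; case: eqP => // H2; case: eqP => // H3.
case/eqP: Hne.
by rewrite -[t](cat_take_drop (size t - size v)) H1 -[take _ t](cat_take_drop (size u)) H2 H3 -catA.
Qed.


Lemma In_cat (T : Type) (x : T) (s1 s2 : seq T) :
  List.In x (s1 ++ s2) <-> List.In x s1 \/ List.In x s2.
Proof. elim: s1 => [|a s1 IH] /=; [tauto | rewrite IH; tauto]. Qed.

Lemma In_flatten (T : Type) (x : T) (L : seq (seq T)) :
  List.In x (flatten L) <-> exists l, List.In l L /\ List.In x l.
Proof.
elim: L => [|l L IH] /=; first by split => // -[l []].
rewrite In_cat IH; split.
  by case=> [H|[l' [H1 H2]]]; [exists l; auto | exists l'; auto].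
by case=> l' [[<-|H1] H2]; [left | right; exists l'].
Qed.

Lemma In_map (T1 T2 : Type) (f : T1 -> T2) y (s : seq T1) :
  List.In y (map f s) <-> exists x, List.In x s /\ y = f x.
Proof.
elim: s => [|a s IH] /=; first by split => // -[x []].
rewrite IH; split.
  by case=> [<-|[x [H1 H2]]]; [exists a; auto | exists x; auto].
by case=> x [[<-|H1] ->]; [left | right; exists x].
Qed.

Lemma In_mem (T : eqType) (x : T) s : List.In x s <-> x \in s.
Proof.
elim: s => [|a s IH] //=; rewrite inE IH; split.
  by case=> [->|->]; rewrite ?eqxx ?orbT.
by case/orP => [/eqP ->|]; auto.
Qed.

Lemma mem_words k u : (u \in words_upto k) = (size u <= k)%N.
Proof.
apply/idP/idP.
  case/flattenP => s /mapP [n Hn ->] /mapP [t _ ->].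
  by rewrite size_tuple; move: Hn; rewrite mem_iota.
move=> Hu; apply/flattenP.
exists [seq tval t | t <- enum {: (size u).-tuple 'I_3}].
  by apply/mapP; exists (size u) => //; rewrite mem_iota.
apply/mapP; exists (@Tuple (size u) _ u (eqxx _)) => //; by rewrite mem_enum.
Qed.

Lemma In_ideal k (G : seq ncp) f : List.In f (ideal_spanning k G) <->
  exists g u v, [/\ List.In g G, (size u <= k)%N, (size v <= k)%N & f = U u g v].
Proof.
rewrite /ideal_spanning In_flatten; split.
  case=> l [/In_map [g [Hg ->]]] /In_flatten [l' [/In_map [u [Hu ->]] /In_map [v [Hv ->]]]].
  by exists g, u, v; move: Hu Hv; rewrite !In_mem !mem_words.
case=> g [u [v [Hg Hu Hv ->]]].
eexists; split; first by apply/In_map; exists g; split.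
apply/In_flatten; eexists; split.
  by apply/In_map; exists u; split => //; apply/In_mem; rewrite mem_words.
by apply/In_map; exists v; split => //; apply/In_mem; rewrite mem_words.
Qed.

Lemma In_nth (T : Type) (d : T) (L : seq T) f :
  List.In f L -> exists i : 'I_(size L), nth d L i = f.
Proof.
elim: L => [|a L IH] //= [<-|/IH [i Hi]]; first by exists ord0.
by exists (lift ord0 i).
Qed.

Lemma nth_In (T : Type) (d : T) (L : seq T) (i : nat) :
  (i < size L)%N -> List.In (nth d L i) L.
Proof. elim: L i => [|a L IH] [|i] //= H; [by left | right; exact: IH]. Qed.

Lemma row_cmx k (L : seq ncp) i :
  row i (component_mx k L) = rv k (nth (fun _ => 0) L i).
Proof. by apply/rowP => j; rewrite !mxE. Qed.

Lemma rv_sub k (L : seq ncp) f : List.In f L -> (rv k f <= component_mx k L)%MS.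
Proof.
case/(In_nth (fun _ => 0)) => i <-; rewrite -row_cmx; exact: row_sub.
Qed.

Lemma rvP k f : rv k f *m Pk k = rv k (proj f).
Proof.
apply/rowP => j; rewrite !mxE (bigD1 j) //= big1 ?addr0.
  by rewrite !mxE eqxx /= inE /proj; case: sqf; rewrite ?mulr1 ?mulr0.
by move=> i Hi; rewrite !mxE (negbTE Hi) mulr0.
Qed.


Lemma rank_Pk k : \rank (Pk k) = #|Sk k|.
Proof.
pose B : 'M[F]_(#|Sk k|, #|{: k.-tuple 'I_3}|) := \matrix_(i, j) (j == enum_val i)%:R.
have rB : \rank B = #|Sk k|.
  apply/eqP; apply/row_freeP; exists B^T; apply/matrixP => i l.
  rewrite !mxE (bigD1 (enum_val i)) //= big1 ?addr0.
    by rewrite !mxE eqxx mul1r (inj_eq enum_val_inj) eq_sym.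
  by move=> j Hj; rewrite !mxE (negbTE Hj) mul0r.
rewrite -rB; apply/eqP; rewrite eqn_leq !mxrankS //.
  apply/row_subP => i.
  rewrite (_ : row i B = row (enum_val i) (Pk k)) ?row_sub //.
  by apply/rowP => l; rewrite !mxE enum_valP andbT eq_sym.
apply/row_subP => j; case Hj: (j \in Sk k).
  rewrite (_ : row j (Pk k) = row (enum_rank_in Hj j) B) ?row_sub //.
  by apply/rowP => l; rewrite !mxE enum_rankK_in // Hj andbT eq_sym.
rewrite (_ : row j (Pk k) = 0) ?sub0mx //.
by apply/rowP => l; rewrite !mxE Hj andbF.
Qed.

Lemma rank_split k m (M : 'M[F]_(m, #|{: k.-tuple 'I_3}|)) :
  (forall j, j \notin Sk k -> ((delta_mx 0 j : 'rV[F]_(#|{: k.-tuple 'I_3}|)) <= M)%MS) ->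
  \rank M = (\rank (M *m Pk k) + (#|{: k.-tuple 'I_3}| - #|Sk k|))%N.
Proof.
move=> H; rewrite -{1}(mxrank_mul_ker M (Pk k)); congr addn.
have sub : (kermx (Pk k) <= M)%MS.
  pose Q : 'M[F]_(#|{: k.-tuple 'I_3}|) :=
    \matrix_(i, j) ((i == j) && (i \notin Sk k))%:R.
  have -> : kermx (Pk k) = kermx (Pk k) *m Q.
    have -> : Q = 1%:M - Pk k.
      by apply/matrixP => i j; rewrite !mxE; case: eqP => //= _; case: (i \in Sk k); rewrite ?subrr ?subr0.
    by rewrite mulmxBr mulmx1 mulmx_ker subr0.
  apply: submx_trans (submxMl _ _) _.
  apply/row_subP => j; case Hj: (j \in Sk k).
    rewrite (_ : row j Q = 0) ?sub0mx //.
    by apply/rowP => l; rewrite !mxE Hj andbF.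
  rewrite (_ : row j Q = delta_mx 0 j); first by apply: H; rewrite Hj.
  by apply/rowP => l; rewrite !mxE Hj andbT eq_sym.
have -> : \rank (M :&: kermx (Pk k)) = \rank (kermx (Pk k)).
  by apply/eqP; rewrite eqn_leq !mxrankS ?capmxSr // sub_capmx sub submx_refl.
by rewrite mxrank_ker rank_Pk.
Qed.


Lemma nsqf_split (s : seq 'I_3) : ~~ sqf s -> exists u a v, s = u ++ [:: a; a] ++ v.
Proof.
elim: s => [|a t IH] //; case: t IH => [|b t] IH //=.
case: (eqVneq a b) => [<- _|Hab] /=; first by exists [::], a, t.
case/IH => u [c [v ->]]; by exists (a :: u), c, v.
Qed.

Lemma quot_formula k (G R : seq ncp) :
  (forall a : 'I_3, List.In (mono F [:: a; a]) G) ->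
  (forall g u v, List.In g G ->
     (forall t : k.-tuple 'I_3, proj (U u g v) t = 0) \/ List.In (U u g v) R) ->
  (forall f, List.In f R -> List.In f (ideal_spanning k G)) ->
  quot_dim k G = (#|Sk k| - \rank (component_mx k R *m Pk k))%N.
Proof.
move=> Hsq Hcl HR.
set M := component_mx k (ideal_spanning k G).
have Hd : forall j, j \notin Sk k ->
    ((delta_mx 0 j : 'rV[F]_(#|{: k.-tuple 'I_3}|)) <= M)%MS.
  move=> j; rewrite inE => /nsqf_split [u [a [v Hs]]].
  have -> : (delta_mx 0 j : 'rV[F]_(#|{: k.-tuple 'I_3}|)) = rv k (U u (mono F [:: a; a]) v).
    apply/rowP => l; rewrite !mxE U_mono -Hs /mono.
    by rewrite (inj_eq val_inj) (inj_eq enum_val_inj).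
  apply: rv_sub; apply/In_ideal; exists (mono F [:: a; a]), u, v; split => //.
    by have := size_tuple (enum_val j); rewrite Hs !size_cat => <-; rewrite leq_addr.
  by have := size_tuple (enum_val j); rewrite Hs !size_cat => <-; rewrite !addnA leq_addl.
rewrite /quot_dim (rank_split Hd).
have -> : \rank (M *m Pk k) = \rank (component_mx k R *m Pk k).
  apply/eqP; rewrite eqn_leq !mxrankS //.
    apply/row_subP => i; rewrite row_mul row_cmx.
    by apply: submxMr; apply: rv_sub; apply: HR; apply: nth_In.
  apply/row_subP => i; rewrite row_mul row_cmx rvP.
  have [g [u [v [Hg _ _ Hf]]]] := proj1 (In_ideal _ _ _) (nth_In (fun _ => 0) (ltn_ord i)); rewrite Hf.
  case: (Hcl g u v Hg) => [Hz|Hin].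
    rewrite (_ : rv k _ = 0) ?sub0mx //.
    by apply/rowP => l; rewrite !mxE Hz.
  by rewrite -rvP; apply: submxMr; apply: rv_sub.
have h1 : (\rank (component_mx k R *m Pk k) <= #|Sk k|)%N.
  by rewrite -(rank_Pk k) mxrankM_maxr.
have h2 : (#|Sk k| <= #|{: k.-tuple 'I_3}|)%N.
  by rewrite -[X in (_ <= X)%N]card_ord max_card.
by rewrite addnC subnDA subKn.
Qed.


Lemma card_Sk k (s : seq (seq 'I_3)) : uniq s ->
  (forall t : k.-tuple 'I_3, sqf t = (tval t \in s)) ->
  all (fun x => size x == k) s -> #|Sk k| = size s.
Proof.
move=> Hu Hs Hall.
have -> : Sk k = enum_val @^-1: [set t : k.-tuple 'I_3 | sqf t].
  by apply/setP => j; rewrite !inE.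
rewrite on_card_preimset; last by apply: onW_bij; exact: enum_val_bij.
pose s' : seq (k.-tuple 'I_3) := pmap insub s.
rewrite (@eq_card _ _ (mem s')); last by move=> t; rewrite inE Hs /s' mem_pmap_sub.
rewrite (card_uniqP (pmap_sub_uniq _ Hu)) size_pmap_sub.
by move: Hall; rewrite all_count => /eqP.
Qed.

Lemma rank_ge r n (X : 'M[F]_(r, n)) (C : 'M[F]_(n, r)) : X *m C = 1%:M -> \rank X = r.
Proof. by move=> H; apply/eqP; apply/row_freeP; exists C. Qed.

Definition colmx k (cs : seq (seq (F * seq 'I_3))) :
  'M[F]_(#|{: k.-tuple 'I_3}|, size cs) :=
  \matrix_(j, l) lin (nth [::] cs l) (tval (enum_val j)).

Lemma cmxP_entry k (R : seq ncp) i j :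
  (component_mx k R *m Pk k) i j = proj (nth (fun _ => 0) R i) (tval (enum_val j)).
Proof. transitivity ((row i (component_mx k R *m Pk k)) 0 j); first by rewrite [RHS]mxE. by rewrite row_mul row_cmx rvP mxE. Qed.

Lemma sum_delta k (G : seq 'I_3 -> F) (s : seq 'I_3) : size s == k ->
  \sum_(j < #|{: k.-tuple 'I_3}|) G (tval (enum_val j)) * (tval (enum_val j) == s)%:R = G s.
Proof.
move=> Hs; rewrite (bigD1 (enum_rank (Tuple Hs))) //= enum_rankK /= eqxx mulr1 big1 ?addr0 //.
move=> j Hj; case: eqP; rewrite ?mulr0 // => E; case/eqP: Hj.
by apply: enum_val_inj; rewrite enum_rankK; apply: val_inj.
Qed.

Lemma pairP k (R : seq ncp) cs i l :
  all (fun c => all (fun p => size p.2 == k) c) cs ->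
  (component_mx k R *m Pk k *m colmx k cs) i l =
  \sum_(p <- nth [::] cs l) p.1 * proj (nth (fun _ => 0) R i) p.2.
Proof.
move=> Hall; rewrite mxE.
under eq_bigr => j _ do rewrite cmxP_entry mxE /lin big_distrr /=.
rewrite exchange_big /=; apply: eq_big_seq => p Hp.
have Hs : size p.2 == k.
  have Hl : (l < size cs)%N by [].
  by move: Hall => /allP /(_ _ (mem_nth [::] Hl)) /allP /(_ _ Hp).
rewrite -(sum_delta (fun t => p.1 * proj (nth (fun=> 0) R i) t) Hs).
by apply: eq_bigr => j _; rewrite /mono mulrCA mulrA.
Qed.


Definition colmx' k r (cs : seq (seq (F * seq 'I_3))) :
  'M[F]_(#|{: k.-tuple 'I_3}|, r) :=
  \matrix_(j, l) lin (nth [::] cs l) (tval (enum_val j)).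

Lemma pairP' k (R : seq ncp) r cs i (l : 'I_r) :
  all (fun p => size p.2 == k) (nth [::] cs l) ->
  (component_mx k R *m Pk k *m colmx' k r cs) i l =
  \sum_(p <- nth [::] cs l) p.1 * proj (nth (fun _ => 0) R i) p.2.
Proof.
move=> Hall; rewrite mxE.
under eq_bigr => j _ do rewrite cmxP_entry mxE /lin big_distrr /=.
rewrite exchange_big /=; apply: eq_big_seq => p Hp.
have Hs : size p.2 == k by move: Hall => /allP /(_ _ Hp).
rewrite -(sum_delta (fun t => p.1 * proj (nth (fun=> 0) R i) t) Hs).
by apply: eq_bigr => j _; rewrite /mono mulrCA mulrA.
Qed.

Lemma rank_pair k (R : seq ncp) cs :
  all (all (fun p => size p.2 == k)) cs ->
  (forall i l : 'I_(size R),
     \sum_(p <- nth [::] cs l) p.1 * proj (nth (fun _ => 0) R i) p.2 = (i == l)%:R) ->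
  \rank (component_mx k R *m Pk k) = size R.
Proof.
move=> Hall H; apply: (@rank_ge _ _ _ (colmx' k (size R) cs)).
apply/matrixP => i l; rewrite pairP' ?H ?mxE //.
case: (ltnP l (size cs)) => Hl; first by move/allP: Hall; apply; apply: mem_nth.
by rewrite nth_default.
Qed.

End Gen.


Ltac ordc' m H := destruct m as [|m]; [ | first [ by [] | ordc' m H ] ].
Ltac ordc i := let m := fresh "m" in let H := fresh "H" in case: i => m H; ordc' m H.

Section K3.
Variable F : fieldType.
Variables (w A1 B1 A2 B2 a1 b1 a2 b2 : F).
Hypothesis Hw0 : w != 0.
Hypothesis Hw1 : w - w ^+ 2 != 0.
Hypothesis HN1 : A1 * a1 + B1 * b1 != 0.
Hypothesis HN2 : A2 * a2 + B2 * b2 != 0.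

Definition R3 : seq (ncpoly F) := [:: U [::] (gen1 w A1 B1) [::]; U [::] (gen2 w A2 B2) [::]].
Definition cs3 : seq (seq (F * seq 'I_3)) :=
  [:: [:: (a1 * (- w ^+ 2 / (w - w ^+ 2)) / (A1 * a1 + B1 * b1), [:: LZ; LX; LY]);
         (a1 * (1 / (w - w ^+ 2)) / (A1 * a1 + B1 * b1), [:: LX; LY; LZ]);
         (b1 * (- w ^+ 2 / (w - w ^+ 2)) / (A1 * a1 + B1 * b1), [:: LY; LX; LZ]);
         (b1 * (1 / (w - w ^+ 2)) / (A1 * a1 + B1 * b1), [:: LZ; LY; LX])];
      [:: (a2 * (- w / (w ^+ 2 - w)) / (A2 * a2 + B2 * b2), [:: LZ; LX; LY]);
         (a2 * (1 / (w ^+ 2 - w)) / (A2 * a2 + B2 * b2), [:: LX; LY; LZ]);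
         (b2 * (- w / (w ^+ 2 - w)) / (A2 * a2 + B2 * b2), [:: LY; LX; LZ]);
         (b2 * (1 / (w ^+ 2 - w)) / (A2 * a2 + B2 * b2), [:: LZ; LY; LX])]].

Lemma rank3 : \rank (component_mx 3 R3 *m Pk F 3) = 2%N.
Proof.
have Hw2 : w ^+ 2 - w != 0 by rewrite -opprB oppr_eq0.
apply: (@rank_pair _ _ _ cs3) => // i l.
ordc i; ordc l; rewrite /= !big_cons !big_nil /proj /= !U_eval /= /gen1 /gen2 /lin /= !big_cons !big_nil /mono /=.
all: field; rewrite ?Hw0 ?Hw1 ?Hw2 ?HN1 ?HN2 //.
Qed.
End K3.



Section K4nd.
Variable F : fieldType.
Variables (w A1 B1 A2 B2 : F).
Hypothesis Hw0 : w != 0.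
Hypothesis Hd : A1 * B2 - A2 * B1 != 0.
Definition R4 (A2 B2 : F) : seq (ncpoly F) :=
  [:: U [:: LX] (gen1 w A1 B1) [::]; U [::] (gen1 w A1 B1) [:: LX];
      U [:: LX] (gen2 w A2 B2) [::]; U [::] (gen2 w A2 B2) [:: LX];
      U [:: LY] (gen1 w A1 B1) [::]; U [::] (gen1 w A1 B1) [:: LY];
      U [:: LY] (gen2 w A2 B2) [::]; U [::] (gen2 w A2 B2) [:: LY];
      U [:: LZ] (gen1 w A1 B1) [::]; U [::] (gen1 w A1 B1) [:: LZ];
      U [:: LZ] (gen2 w A2 B2) [::]; U [::] (gen2 w A2 B2) [:: LZ]].
Definition cs4nd : seq (seq (F * seq 'I_3)) := [::
  [:: (B2 / (1 * (A1 * B2 - A2 * B1)), [:: LX; LZ; LX; LY]); (- A2 / (1 * (A1 * B2 - A2 * B1)), [:: LX; LY; LX; LZ])];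
  [:: (B2 / (1 * (A1 * B2 - A2 * B1)), [:: LZ; LX; LY; LX]); (- A2 / (1 * (A1 * B2 - A2 * B1)), [:: LY; LX; LZ; LX])];
  [:: (- B1 / (1 * (A1 * B2 - A2 * B1)), [:: LX; LZ; LX; LY]); (A1 / (1 * (A1 * B2 - A2 * B1)), [:: LX; LY; LX; LZ])];
  [:: (- B1 / (1 * (A1 * B2 - A2 * B1)), [:: LZ; LX; LY; LX]); (A1 / (1 * (A1 * B2 - A2 * B1)), [:: LY; LX; LZ; LX])];
  [:: (B2 / (w * (A1 * B2 - A2 * B1)), [:: LY; LX; LY; LZ]); (- A2 / (w * (A1 * B2 - A2 * B1)), [:: LY; LZ; LY; LX])];
  [:: (B2 / (w * (A1 * B2 - A2 * B1)), [:: LX; LY; LZ; LY]); (- A2 / (w * (A1 * B2 - A2 * B1)), [:: LZ; LY; LX; LY])];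
  [:: (- B1 / (w ^+ 2 * (A1 * B2 - A2 * B1)), [:: LY; LX; LY; LZ]); (A1 / (w ^+ 2 * (A1 * B2 - A2 * B1)), [:: LY; LZ; LY; LX])];
  [:: (- B1 / (w ^+ 2 * (A1 * B2 - A2 * B1)), [:: LX; LY; LZ; LY]); (A1 / (w ^+ 2 * (A1 * B2 - A2 * B1)), [:: LZ; LY; LX; LY])];
  [:: (B2 / (w ^+ 2 * (A1 * B2 - A2 * B1)), [:: LZ; LY; LZ; LX]); (- A2 / (w ^+ 2 * (A1 * B2 - A2 * B1)), [:: LZ; LX; LZ; LY])];
  [:: (B2 / (w ^+ 2 * (A1 * B2 - A2 * B1)), [:: LY; LZ; LX; LZ]); (- A2 / (w ^+ 2 * (A1 * B2 - A2 * B1)), [:: LX; LZ; LY; LZ])];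
  [:: (- B1 / (w * (A1 * B2 - A2 * B1)), [:: LZ; LY; LZ; LX]); (A1 / (w * (A1 * B2 - A2 * B1)), [:: LZ; LX; LZ; LY])];
  [:: (- B1 / (w * (A1 * B2 - A2 * B1)), [:: LY; LZ; LX; LZ]); (A1 / (w * (A1 * B2 - A2 * B1)), [:: LX; LZ; LY; LZ])]].

Lemma rank4nd : \rank (component_mx 4 (R4 A2 B2) *m Pk F 4) = 12%N.
Proof.
have Hw2 : w ^+ 2 != 0 by rewrite expf_neq0.
apply: (@rank_pair _ _ _ cs4nd) => // i l.
ordc i; ordc l; rewrite /= !big_cons !big_nil /proj /= !U_eval /=; rewrite /gen1 /gen2 /lin /mono ?big_cons ?big_nil /=.
all: field; rewrite ?Hw0 ?Hw2 ?Hd //.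
Qed.
End K4nd.



Section K4d0.
Variable F : fieldType.
Variables (w A1 B1 l a1 b1 : F).
Hypothesis Hw0 : w != 0.
Hypothesis Hl : l != 0.
Hypothesis HN : A1 * a1 + B1 * b1 != 0.
Hypothesis HD1 : w ^+ 2 - w != 0.
Hypothesis HD2 : 1 - w != 0.
Hypothesis HD3 : w - w ^+ 3 != 0.
Hypothesis HD4 : w ^+ 2 - 1 != 0.
Hypothesis HD5 : w - w ^+ 2 != 0.
Hypothesis HD6 : 1 - w ^- 1 != 0.
Hypothesis HD7 : w - 1 != 0.

Definition R4' : seq (ncpoly F) :=
  [:: U [:: LX] (gen1 w A1 B1) [::]; U [::] (gen1 w A1 B1) [:: LX];
      U [:: LX] (gen2 w (l * A1) (l * B1)) [::];
      U [:: LY] (gen1 w A1 B1) [::]; U [::] (gen1 w A1 B1) [:: LY];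
      U [:: LY] (gen2 w (l * A1) (l * B1)) [::];
      U [:: LZ] (gen1 w A1 B1) [::]; U [::] (gen1 w A1 B1) [:: LZ];
      U [:: LZ] (gen2 w (l * A1) (l * B1)) [::]].
Definition cs4d0 : seq (seq (F * seq 'I_3)) := [::
  [:: (a1 / (1 * (A1 * a1 + B1 * b1)), [:: LX; LZ; LX; LY]); (b1 / (1 * (A1 * a1 + B1 * b1)), [:: LX; LY; LX; LZ]); (- (1 * l / 1) * ((a1 / (l * (A1 * a1 + B1 * b1) * (w - w ^+ 2)))), [:: LX; LY; LZ; LX]); (- (1 * l / 1) * (- (a1 / (l * (A1 * a1 + B1 * b1) * (w - w ^+ 2))) * (w ^+ 2 / 1)), [:: LX; LZ; LX; LY]); (- (1 * l / 1) * (- (a1 / (l * (A1 * a1 + B1 * b1) * (w - w ^+ 2))) * (w / 1)), [:: LZ; LX; LY; LX]); (- (1 * l / 1) * ((b1 / (l * (A1 * a1 + B1 * b1) * (w ^+ 2 - w)))), [:: LX; LZ; LY; LX]); (- (1 * l / 1) * (- (b1 / (l * (A1 * a1 + B1 * b1) * (w ^+ 2 - w))) * (w / 1)), [:: LX; LY; LX; LZ]); (- (1 * l / 1) * (- (b1 / (l * (A1 * a1 + B1 * b1) * (w ^+ 2 - w))) * (w ^+ 2 / 1)), [:: LY; LX; LZ; LX])];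
  [:: (a1 / (1 * (A1 * a1 + B1 * b1)), [:: LZ; LX; LY; LX]); (b1 / (1 * (A1 * a1 + B1 * b1)), [:: LY; LX; LZ; LX])];
  [:: ((a1 / (l * (A1 * a1 + B1 * b1) * (w - w ^+ 2))), [:: LX; LY; LZ; LX]); (- (a1 / (l * (A1 * a1 + B1 * b1) * (w - w ^+ 2))) * (w ^+ 2 / 1), [:: LX; LZ; LX; LY]); (- (a1 / (l * (A1 * a1 + B1 * b1) * (w - w ^+ 2))) * (w / 1), [:: LZ; LX; LY; LX]); ((b1 / (l * (A1 * a1 + B1 * b1) * (w ^+ 2 - w))), [:: LX; LZ; LY; LX]); (- (b1 / (l * (A1 * a1 + B1 * b1) * (w ^+ 2 - w))) * (w / 1), [:: LX; LY; LX; LZ]); (- (b1 / (l * (A1 * a1 + B1 * b1) * (w ^+ 2 - w))) * (w ^+ 2 / 1), [:: LY; LX; LZ; LX])];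
  [:: (a1 / (w * (A1 * a1 + B1 * b1)), [:: LY; LX; LY; LZ]); (b1 / (w * (A1 * a1 + B1 * b1)), [:: LY; LZ; LY; LX]); (- (w ^+ 2 * l / w) * ((a1 / (l * (A1 * a1 + B1 * b1) * (1 - w)))), [:: LY; LZ; LX; LY]); (- (w ^+ 2 * l / w) * (- (a1 / (l * (A1 * a1 + B1 * b1) * (1 - w))) * (1 / w)), [:: LY; LX; LY; LZ]); (- (w ^+ 2 * l / w) * (- (a1 / (l * (A1 * a1 + B1 * b1) * (1 - w))) * (w ^+ 2 / w)), [:: LX; LY; LZ; LY]); (- (w ^+ 2 * l / w) * ((b1 / (l * (A1 * a1 + B1 * b1) * (w - w ^+ 3)))), [:: LY; LX; LZ; LY]); (- (w ^+ 2 * l / w) * (- (b1 / (l * (A1 * a1 + B1 * b1) * (w - w ^+ 3))) * (w ^+ 2 / w)), [:: LY; LZ; LY; LX]); (- (w ^+ 2 * l / w) * (- (b1 / (l * (A1 * a1 + B1 * b1) * (w - w ^+ 3))) * (1 / w)), [:: LZ; LY; LX; LY])];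
  [:: (a1 / (w * (A1 * a1 + B1 * b1)), [:: LX; LY; LZ; LY]); (b1 / (w * (A1 * a1 + B1 * b1)), [:: LZ; LY; LX; LY])];
  [:: ((a1 / (l * (A1 * a1 + B1 * b1) * (1 - w))), [:: LY; LZ; LX; LY]); (- (a1 / (l * (A1 * a1 + B1 * b1) * (1 - w))) * (1 / w), [:: LY; LX; LY; LZ]); (- (a1 / (l * (A1 * a1 + B1 * b1) * (1 - w))) * (w ^+ 2 / w), [:: LX; LY; LZ; LY]); ((b1 / (l * (A1 * a1 + B1 * b1) * (w - w ^+ 3))), [:: LY; LX; LZ; LY]); (- (b1 / (l * (A1 * a1 + B1 * b1) * (w - w ^+ 3))) * (w ^+ 2 / w), [:: LY; LZ; LY; LX]); (- (b1 / (l * (A1 * a1 + B1 * b1) * (w - w ^+ 3))) * (1 / w), [:: LZ; LY; LX; LY])];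
  [:: (a1 / (w ^+ 2 * (A1 * a1 + B1 * b1)), [:: LZ; LY; LZ; LX]); (b1 / (w ^+ 2 * (A1 * a1 + B1 * b1)), [:: LZ; LX; LZ; LY]); (- (w * l / w ^+ 2) * ((a1 / (l * (A1 * a1 + B1 * b1) * (w ^+ 2 - 1)))), [:: LZ; LX; LY; LZ]); (- (w * l / w ^+ 2) * (- (a1 / (l * (A1 * a1 + B1 * b1) * (w ^+ 2 - 1))) * (w / w ^+ 2)), [:: LZ; LY; LZ; LX]); (- (w * l / w ^+ 2) * (- (a1 / (l * (A1 * a1 + B1 * b1) * (w ^+ 2 - 1))) * (1 / w ^+ 2)), [:: LY; LZ; LX; LZ]); (- (w * l / w ^+ 2) * ((b1 / (l * (A1 * a1 + B1 * b1) * (1 - w ^- 1)))), [:: LZ; LY; LX; LZ]); (- (w * l / w ^+ 2) * (- (b1 / (l * (A1 * a1 + B1 * b1) * (1 - w ^- 1))) * (1 / w ^+ 2)), [:: LZ; LX; LZ; LY]); (- (w * l / w ^+ 2) * (- (b1 / (l * (A1 * a1 + B1 * b1) * (1 - w ^- 1))) * (w / w ^+ 2)), [:: LX; LZ; LY; LZ])];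
  [:: (a1 / (w ^+ 2 * (A1 * a1 + B1 * b1)), [:: LY; LZ; LX; LZ]); (b1 / (w ^+ 2 * (A1 * a1 + B1 * b1)), [:: LX; LZ; LY; LZ])];
  [:: ((a1 / (l * (A1 * a1 + B1 * b1) * (w ^+ 2 - 1))), [:: LZ; LX; LY; LZ]); (- (a1 / (l * (A1 * a1 + B1 * b1) * (w ^+ 2 - 1))) * (w / w ^+ 2), [:: LZ; LY; LZ; LX]); (- (a1 / (l * (A1 * a1 + B1 * b1) * (w ^+ 2 - 1))) * (1 / w ^+ 2), [:: LY; LZ; LX; LZ]); ((b1 / (l * (A1 * a1 + B1 * b1) * (1 - w ^- 1))), [:: LZ; LY; LX; LZ]); (- (b1 / (l * (A1 * a1 + B1 * b1) * (1 - w ^- 1))) * (1 / w ^+ 2), [:: LZ; LX; LZ; LY]); (- (b1 / (l * (A1 * a1 + B1 * b1) * (1 - w ^- 1))) * (w / w ^+ 2), [:: LX; LZ; LY; LZ])]].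

Lemma rank4d0 : \rank (component_mx 4 R4' *m Pk F 4) = 9%N.
Proof.
have Hw2 : w ^+ 2 != 0 by rewrite expf_neq0.
apply: (@rank_pair _ _ _ cs4d0) => // i l0.
ordc i; ordc l0; rewrite /= !big_cons !big_nil /proj /= !U_eval /=; rewrite /gen1 /gen2 /lin /mono ?big_cons ?big_nil /=.
all: field; rewrite ?Hw0 ?Hw2 ?Hl ?HN ?HD1 ?HD2 ?HD3 ?HD4 ?HD5 ?HD6 ?HD7 ?oner_neq0 //.

Qed.
End K4d0.




Lemma I3_cases (a : 'I_3) : a = LX \/ a = LY \/ a = LZ.
Proof.
case: a => [[|[|[|]]]] // H.
- by left; apply/val_inj.
- by right; left; apply/val_inj.
- by right; right; apply/val_inj.
Qed.

Lemma tuple4 (P : seq 'I_3 -> Prop) :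
  (forall a b c d : 'I_3, P [:: a; b; c; d]) -> forall t : 4.-tuple 'I_3, P (tval t).
Proof. move=> H [s Hs] /=; case: s Hs => [|a [|b [|c [|d [|]]]]] //= _; exact: H. Qed.

Section Up.
Variable F : fieldType.

Lemma rank_le_list k (R R' : seq (ncpoly F)) :
  (forall f, List.In f R -> (rv k (proj f) <= component_mx k R' *m Pk F k)%MS) ->
  (\rank (component_mx k R *m Pk F k) <= \rank (component_mx k R' *m Pk F k))%N.
Proof.
move=> H; apply: mxrankS; apply/row_subP => i; rewrite row_mul row_cmx rvP.
by apply: H; apply: nth_In.
Qed.

Lemma rv_proj_sub k (R : seq (ncpoly F)) f :
  List.In f R -> (rv k (proj f) <= component_mx k R *m Pk F k)%MS.
Proof. by move=> H; rewrite -rvP; apply: submxMr; apply: rv_sub. Qed.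

Lemma rel_sub k (R : seq (ncpoly F)) f f1 f2 f3 (al : F) :
  List.In f1 R -> List.In f2 R -> List.In f3 R ->
  (forall t : k.-tuple 'I_3, proj f t = al * proj f1 t + al * proj f2 t - proj f3 t) ->
  (rv k (proj f) <= component_mx k R *m Pk F k)%MS.
Proof.
move=> H1 H2 H3 H.
have -> : rv k (proj f) = al *: rv k (proj f1) + al *: rv k (proj f2) + (-1) *: rv k (proj f3).
  by apply/rowP => j; rewrite !mxE H mulN1r.
by rewrite !addmx_sub // scalemx_sub // rv_proj_sub.
Qed.

Variables (w A1 B1 l : F).
Hypothesis Hw3 : w ^+ 3 = 1.

Lemma rank4d0_up :
  (\rank (component_mx 4 (R4 w A1 B1 (l * A1) (l * B1)) *m Pk F 4) <= 9)%N.
Proof.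
apply: leq_trans (rank_leq_row (component_mx 4 (R4' w A1 B1 l) *m Pk F 4)).
apply: rank_le_list => f /=.
case=> [<-|[<-|[<-|[<-|[<-|[<-|[<-|[<-|[<-|[<-|[<-|[<-|[]]]]]]]]]]]]];
  try (apply: (@rv_proj_sub 4 (R4' w A1 B1 l)); rewrite /R4' /=; by do 9? [by left | right]).
- apply: (@rel_sub 4 (R4' w A1 B1 l) _ (U [:: LX] (gen1 w A1 B1) [::]) (U [::] (gen1 w A1 B1) [:: LX])
     (U [:: LX] (gen2 w (l * A1) (l * B1)) [::]) l); rewrite /R4' /=; try (do 9? [by left | right]).
  move=> t; move: (tval t) (size_tuple t) => s; case: s => [|a [|b [|c [|d [|]]]]] //= _.
  case: (I3_cases a) => [->|[->|->]]; case: (I3_cases b) => [->|[->|->]];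
  case: (I3_cases c) => [->|[->|->]]; case: (I3_cases d) => [->|[->|->]];
  rewrite /proj /=; rewrite ?U_eval /=; rewrite /gen1 /gen2 /lin /mono ?big_cons ?big_nil /=; ring: Hw3.
- apply: (@rel_sub 4 (R4' w A1 B1 l) _ (U [:: LY] (gen1 w A1 B1) [::]) (U [::] (gen1 w A1 B1) [:: LY])
     (U [:: LY] (gen2 w (l * A1) (l * B1)) [::]) (l * w)); rewrite /R4' /=; try (do 9? [by left | right]).
  move=> t; move: (tval t) (size_tuple t) => s; case: s => [|a [|b [|c [|d [|]]]]] //= _.
  case: (I3_cases a) => [->|[->|->]]; case: (I3_cases b) => [->|[->|->]];
  case: (I3_cases c) => [->|[->|->]]; case: (I3_cases d) => [->|[->|->]];
  rewrite /proj /=; rewrite ?U_eval /=; rewrite /gen1 /gen2 /lin /mono ?big_cons ?big_nil /=; ring: Hw3.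
- apply: (@rel_sub 4 (R4' w A1 B1 l) _ (U [:: LZ] (gen1 w A1 B1) [::]) (U [::] (gen1 w A1 B1) [:: LZ])
     (U [:: LZ] (gen2 w (l * A1) (l * B1)) [::]) (l * w ^+ 2)); rewrite /R4' /=; try (do 9? [by left | right]).
  move=> t; move: (tval t) (size_tuple t) => s; case: s => [|a [|b [|c [|d [|]]]]] //= _.
  case: (I3_cases a) => [->|[->|->]]; case: (I3_cases b) => [->|[->|->]];
  case: (I3_cases c) => [->|[->|->]]; case: (I3_cases d) => [->|[->|->]];
  rewrite /proj /=; rewrite ?U_eval /=; rewrite /gen1 /gen2 /lin /mono ?big_cons ?big_nil /=; ring: Hw3.
Qed.
End Up.


Definition sfw0 : seq (seq 'I_3) := [:: [:: ]].
Definition sfw1 : seq (seq 'I_3) := [:: [:: LX]; [:: LY]; [:: LZ]].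
Definition sfw2 : seq (seq 'I_3) := [:: [:: LX; LY]; [:: LX; LZ]; [:: LY; LX]; [:: LY; LZ]; [:: LZ; LX]; [:: LZ; LY]].
Definition sfw3 : seq (seq 'I_3) := [:: [:: LX; LY; LX]; [:: LX; LY; LZ]; [:: LX; LZ; LX]; [:: LX; LZ; LY]; [:: LY; LX; LY]; [:: LY; LX; LZ]; [:: LY; LZ; LX]; [:: LY; LZ; LY]; [:: LZ; LX; LY]; [:: LZ; LX; LZ]; [:: LZ; LY; LX]; [:: LZ; LY; LZ]].
Definition sfw4 : seq (seq 'I_3) := [:: [:: LX; LY; LX; LY]; [:: LX; LY; LX; LZ]; [:: LX; LY; LZ; LX]; [:: LX; LY; LZ; LY]; [:: LX; LZ; LX; LY]; [:: LX; LZ; LX; LZ]; [:: LX; LZ; LY; LX]; [:: LX; LZ; LY; LZ]; [:: LY; LX; LY; LX]; [:: LY; LX; LY; LZ]; [:: LY; LX; LZ; LX]; [:: LY; LX; LZ; LY]; [:: LY; LZ; LX; LY]; [:: LY; LZ; LX; LZ]; [:: LY; LZ; LY; LX]; [:: LY; LZ; LY; LZ]; [:: LZ; LX; LY; LX]; [:: LZ; LX; LY; LZ]; [:: LZ; LX; LZ; LX]; [:: LZ; LX; LZ; LY]; [:: LZ; LY; LX; LY]; [:: LZ; LY; LX; LZ]; [:: LZ; LY; LZ; LX]; [:: LZ; LY; LZ; LY]].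
Lemma cardS0 : #|Sk 0| = 1%N.
Proof.
rewrite (@card_Sk 0 sfw0) //.
move=> t; move: (tval t) (size_tuple t) => s; case: s => [|] //= _; by [].
Qed.
Lemma cardS1 : #|Sk 1| = 3%N.
Proof.
rewrite (@card_Sk 1 sfw1) //.
move=> t; move: (tval t) (size_tuple t) => s; case: s => [|a [|]] //= _; case: (I3_cases a) => [->|[->|->]]; by [].
Qed.
Lemma cardS2 : #|Sk 2| = 6%N.
Proof.
rewrite (@card_Sk 2 sfw2) //.
move=> t; move: (tval t) (size_tuple t) => s; case: s => [|a [|b [|]]] //= _; case: (I3_cases a) => [->|[->|->]]; case: (I3_cases b) => [->|[->|->]]; by [].
Qed.
Lemma cardS3 : #|Sk 3| = 12%N.
Proof.
rewrite (@card_Sk 3 sfw3) //.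
move=> t; move: (tval t) (size_tuple t) => s; case: s => [|a [|b [|c [|]]]] //= _; case: (I3_cases a) => [->|[->|->]]; case: (I3_cases b) => [->|[->|->]]; case: (I3_cases c) => [->|[->|->]]; by [].
Qed.
Lemma cardS4 : #|Sk 4| = 24%N.
Proof.
rewrite (@card_Sk 4 sfw4) //.
move=> t; move: (tval t) (size_tuple t) => s; case: s => [|a [|b [|c [|d [|]]]]] //= _; case: (I3_cases a) => [->|[->|->]]; case: (I3_cases b) => [->|[->|->]]; case: (I3_cases c) => [->|[->|->]]; case: (I3_cases d) => [->|[->|->]]; by [].
Qed.


Section Cls.
Variable F : fieldType.

Lemma sqf_sq_cat (u v : seq 'I_3) a : sqf (u ++ [:: a; a] ++ v) = false.
Proof.
elim: u => [|b u IH] /=; first by rewrite eqxx.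
by move: IH; case: u => [|c u] /= ->; rewrite andbF.
Qed.

Lemma sq_zero a u v (t : seq 'I_3) : proj (U u (mono F [:: a; a]) v) t = 0.
Proof.
rewrite /proj U_mono /mono; case: eqP => [->|_]; first by rewrite sqf_sq_cat.
by case: sqf.
Qed.

Lemma lin_zero (l : seq (F * seq 'I_3)) d s :
  all (fun p => size p.2 == d) l -> size s != d -> lin l s = 0.
Proof.
move=> Hl Hs; rewrite /lin big_seq big1 // => p Hp.
move/allP: Hl => /(_ p Hp) /eqP Hp2.
rewrite /mono; case: eqP => [E|_]; last by rewrite mulr0.
by move: Hs; rewrite E Hp2 eqxx.
Qed.

Lemma gen1_hom (w A B : F) s : size s != 3%N -> gen1 w A B s = 0.
Proof. by apply: lin_zero. Qed.
Lemma gen2_hom (w A B : F) s : size s != 3%N -> gen2 w A B s = 0.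
Proof. by apply: lin_zero. Qed.

Lemma zero_by_size k (g : ncpoly F) u v : (forall s, size s != 3%N -> g s = 0) ->
  (size u + 3 + size v != k)%N -> forall t : k.-tuple 'I_3, proj (U u g v) t = 0.
Proof.
move=> Hg Hs t; rewrite /proj; case: sqf => //; apply: (@U_size _ u g v 3 t Hg); by rewrite size_tuple eq_sym.
Qed.

Variables (w A1 B1 A2 B2 : F).
Local Notation G := (SIp_gens w A1 B1 A2 B2).

Lemma HsqG (a : 'I_3) : List.In (mono F [:: a; a]) G.
Proof. by case: (I3_cases a) => [->|[->|->]] /=; auto. Qed.

Lemma cls k R g u v :
  (forall u v, (size u + 3 + size v)%N = k ->
     List.In (U u (gen1 w A1 B1) v) R /\ List.In (U u (gen2 w A2 B2) v) R) ->
  List.In g G ->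
  (forall t : k.-tuple 'I_3, proj (U u g v) t = 0) \/ List.In (U u g v) R.
Proof.
move=> HR; case=> [<-|[<-|[<-|[<-|[<-|[]]]]]]; try by left => t; apply: sq_zero.
- case: (eqVneq (size u + 3 + size v)%N k) => [E|NE].
    by right; case: (HR u v E).
  by left; apply: zero_by_size => // s; apply: gen1_hom.
- case: (eqVneq (size u + 3 + size v)%N k) => [E|NE].
    by right; case: (HR u v E).
  by left; apply: zero_by_size => // s; apply: gen2_hom.
Qed.

Lemma quot_small k : (k <= 2)%N -> quot_dim k G = #|Sk k|.
Proof.
move=> Hk; rewrite (@quot_formula _ k G [::]) //.
- have := rank_leq_row (component_mx k [::] *m Pk F k); rewrite leqn0 => /eqP ->.
  by rewrite subn0.
- exact: HsqG.
- move=> g u v Hg; apply: cls => // u' v' E; exfalso; move: E Hk; slia.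
Qed.

Lemma quot3 : quot_dim 3 G = (#|Sk 3| - \rank (component_mx 3 (R3 w A1 B1 A2 B2) *m Pk F 3))%N.
Proof.
rewrite (@quot_formula _ 3 G (R3 w A1 B1 A2 B2)) //.
- exact: HsqG.
- move=> g u v Hg; apply: cls => // u' v' E.
  have Hu : u' = [::] by apply/size0nil; move: E; slia.
  have Hv : v' = [::] by apply/size0nil; move: E; slia.
  by subst; rewrite /R3 /=; auto.
- move=> f; rewrite /R3 /= => -[<-|[<-|[]]]; apply/In_ideal.
  + by exists (gen1 w A1 B1), [::], [::]; split => //=; auto 6.
  + by exists (gen2 w A2 B2), [::], [::]; split => //=; auto 6.
Qed.

Lemma quot4 : quot_dim 4 G = (#|Sk 4| - \rank (component_mx 4 (R4 w A1 B1 A2 B2) *m Pk F 4))%N.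
Proof.
rewrite (@quot_formula _ 4 G (R4 w A1 B1 A2 B2)) //.
- exact: HsqG.
- move=> g u v Hg; apply: cls => // u' v' E.
  case: u' E => [|a [|a' u']] E; case: v' E => [|b [|b' v']] E; try (exfalso; move: E; rewrite /= ?size_cat; slia).
  + case: (I3_cases b) => [->|[->|->]]; rewrite /R4 /=; split; do ?[by left | right].
  + case: (I3_cases a) => [->|[->|->]]; rewrite /R4 /=; split; do ?[by left | right].
- move=> f; rewrite /R4 /=.
  case=> [<-|[<-|[<-|[<-|[<-|[<-|[<-|[<-|[<-|[<-|[<-|[<-|[]]]]]]]]]]]]]; apply/In_ideal.
  all: eexists; eexists; eexists; split; last reflexivity; rewrite /=; do ?[by left | right].
  all: done.
Qed.

End Cls.


Section Main.
Variable F : fieldType.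

Lemma pair_inv (A B : F) : (A, B) != (0, 0) -> exists a b, A * a + B * b != 0.
Proof.
move=> H; case: (eqVneq A 0) => [EA|HA].
  exists 0, 1; rewrite EA mul0r add0r mulr1.
  by apply: contraNneq H => ->; rewrite EA.
by exists 1, 0; rewrite mulr1 mulr0 addr0.
Qed.

Lemma det0_scal (A1 B1 A2 B2 : F) : (A1, B1) != (0, 0) -> (A2, B2) != (0, 0) ->
  A1 * B2 - A2 * B1 = 0 -> exists l, [/\ l != 0, A2 = l * A1 & B2 = l * B1].
Proof.
move=> H1 H2 Hd; have [a [b HN]] := pair_inv H1.
pose l := (A2 * a + B2 * b) / (A1 * a + B1 * b); exists l.
have EA : A2 = l * A1.
  apply: (mulIf HN); rewrite /l mulrAC divfK //.
  apply/eqP; rewrite -subr_eq0; apply/eqP.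
  transitivity (- b * (A1 * B2 - A2 * B1)); [ring | by rewrite Hd mulr0].
have EB : B2 = l * B1.
  apply: (mulIf HN); rewrite /l mulrAC divfK //.
  apply/eqP; rewrite -subr_eq0; apply/eqP.
  transitivity (a * (A1 * B2 - A2 * B1)); [ring | by rewrite Hd mulr0].
split => //; apply: contraNneq H2 => E0.
by rewrite EA EB E0 !mul0r.
Qed.

Lemma main_gen (w A1 B1 A2 B2 : F) :
  3.-primitive_root w ->
  (A1, B1) != (0, 0) -> (A2, B2) != (0, 0) ->
  (forall k : nat, (k <= 4)%N ->
     quot_dim k (SIp_gens w A1 B1 A2 B2) = 'C(k + 2, 2))
  <-> A1 * B2 - A2 * B1 = 0.
Proof.
move=> Hw HAB1 HAB2.
have Hw3 : w ^+ 3 = 1 := prim_expr_order Hw.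
have Hw1 : w != 1 by move: (prim_order_dvd Hw 1); rewrite expr1 => <-.
have Hw21 : w ^+ 2 != 1 by move: (prim_order_dvd Hw 2) => <-.
have Hw0 : w != 0.
  by apply/eqP => E; move: Hw3; rewrite E expr0n /= => /eqP; rewrite eq_sym oner_eq0.
have HD5 : w - w ^+ 2 != 0.
  rewrite subr_eq0; apply: contra_neq Hw1 => E.
  by apply: (mulfI Hw0); rewrite mulr1 -expr2 -E.
have HD1 : w ^+ 2 - w != 0 by rewrite subr_eq0 eq_sym -subr_eq0.
have HD2 : 1 - w != 0 by rewrite subr_eq0 eq_sym.
have HD7 : w - 1 != 0 by rewrite subr_eq0.
have HD3 : w - w ^+ 3 != 0 by rewrite Hw3.
have HD4 : w ^+ 2 - 1 != 0 by rewrite subr_eq0.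
have HD6 : 1 - w ^-1 != 0.
  rewrite subr_eq0; apply: contra_neq Hw1 => E.
  by rewrite -[w]mulr1 {1}E mulfV.
have [a1 [b1 HN1]] := pair_inv HAB1.
have [a2 [b2 HN2]] := pair_inv HAB2.
have Q3 : quot_dim 3 (SIp_gens w A1 B1 A2 B2) = 10%N.
  by rewrite quot3 cardS3 (rank3 (a1 := a1) (b1 := b1) (a2 := a2) (b2 := b2)).
split.
  move=> H; apply/eqP; apply/negPn/negP => Hd.
  by have := H 4%N isT; rewrite quot4 cardS4 rank4nd.
move=> Hd k Hk.
have [l [Hl EA EB]] := det0_scal HAB1 HAB2 Hd.
case: k Hk => [|[|[|[|[|k]]]]] // _.
- by rewrite quot_small // cardS0.
- by rewrite quot_small // cardS1.
- by rewrite quot_small // cardS2.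
rewrite quot4 cardS4 EA EB.
have -> : \rank (component_mx 4 (R4 w A1 B1 (l * A1) (l * B1)) *m Pk F 4) = 9%N.
  apply/eqP; rewrite eqn_leq rank4d0_up //=.
  apply: (@leq_trans (\rank (component_mx 4 (R4' w A1 B1 l) *m Pk F 4))).
    by rewrite (rank4d0 (a1 := a1) (b1 := b1)).
  apply: (@rank_le_list F 4 (R4' w A1 B1 l) (R4 w A1 B1 (l * A1) (l * B1))) => f /=.
  case=> [<-|[<-|[<-|[<-|[<-|[<-|[<-|[<-|[<-|[]]]]]]]]]];
    apply: (@rv_proj_sub _ 4 (R4 w A1 B1 (l * A1) (l * B1))); rewrite /R4 /=; do ?[by left | right].
by [].
Qed.

End Main.

Unset Implicit Arguments.

Theorem mainTheorem9 (w A1 B1 A2 B2 : Cx) :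
  3.-primitive_root w ->
  (A1, B1) != (0, 0) -> (A2, B2) != (0, 0) ->
  (forall k : nat, (k <= 4)%N ->
     quot_dim k (SIp_gens w A1 B1 A2 B2) = 'C(k + 2, 2))
  <-> A1 * B2 - A2 * B1 = 0.
Proof. exact: main_gen. Qed.
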